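(* Consider binary node classification with classes $\{0,1\}$, and let $k\in\{0,1\}$. Let $c_0,c_1\in(0,1)$ be the class homophily parameters, and assume the classes are balanced, i.e. $P(\hat{Y}=0)=P(\hat{Y}=1)$, and the graph is heterophilic, i.e. $c_k < 1-c_{1-k}$. Then for any node $i$ with neighborhood $\mathcal{N}(i)$ and observed neighbor labels $\{Y_j=y_j\}_{j\in\mathcal{N}(i)}$, $$P\big(\hat{Y}_i = k \mid \{Y_j=y_j\}_{j\in\mathcal{N}(i)}\big) > 0.5$$ if and only if $$|\mathcal{N}_k(i)| < |\mathcal{N}_{1-k}(i)| \cdot \frac{\log c_{1-k} - \log (1 - c_k)}{\log c_k - \log (1 - c_{1-k})}.$$
   Context: Model: each node $i$ has a (latent/soft) class $\hat{Y}_i\in\{0,1\}$, and each neighbor $j\in\mathcal{N}(i)$ has an observed label $Y_j\in\{0,1\}$. Given $\hat{Y}_i$, the neighbor labels are conditionally independent with $P(Y_j=k\mid \hat{Y}_i=k)=c_k$ and $P(Y_j=1-k\mid\hat{Y}_i=k)=1-c_k$ for $k\in\{0,1\}$ ($c_k$ is called the class homophily of class $k$). The posterior is obtained by Bayes' rule: $P(\hat Y_i=k\mid\{Y_j=y_j\}_{j\in\mathcal N(i)})\propto P(\hat Y_i=k)\prod_{j\in\mathcal N(i)}P(Y_j=y_j\mid \hat Y_i=k)$. Notation: $\mathcal{N}_k(i)=\{j\in\mathcal{N}(i): y_j=k\}$ and $\mathcal{N}_{1-k}(i)=\{j\in\mathcal{N}(i): y_j=1-k\}$. *)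

(* Defs.v *)
From mathcomp Require Import all_boot all_order all_algebra.
From mathcomp Require Import reals exp.
Set Implicit Arguments. Unset Strict Implicit. Unset Printing Implicit Defensive.
Import Order.TTheory GRing.Theory Num.Theory.
Local Open Scope ring_scope.

(* Classes {0,1} are encoded as bool: false = 0, true = 1; 1 - k is ~~ k. *)

(* P(Y_j = yj | hatY_i = k): c_k if yj = k, else 1 - c_k. *)
Definition lik {R : realType} (c : bool -> R) (k yj : bool) : R :=
  if yj == k then c k else 1 - c k.

Definition joint {R : realType} {T : finType} (pi : bool -> R) (c : bool -> R)
    (N : {set T}) (y : T -> bool) (k : bool) : R :=
  pi k * \prod_(j in N) lik c k (y j).

Definition posterior {R : realType} {T : finType} (pi : bool -> R) (c : bool -> R)
    (N : {set T}) (y : T -> bool) (k : bool) : R :=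
  joint pi c N y k / \sum_(k' : bool) joint pi c N y k'.

Definition Nk {T : finType} (N : {set T}) (y : T -> bool) (k : bool) : {set T} :=
  [set j in N | y j == k].

(* Main.v *)
Require Import Defs.
From mathcomp Require Import all_boot all_order all_algebra.
From mathcomp Require Import reals exp.
From mathcomp Require Import ring lra.
Import Order.TTheory GRing.Theory Num.Theory.
Local Open Scope ring_scope.

Lemma prod_lik (R : realType) (T : finType) (c : bool -> R) (N : {set T})
  (y : T -> bool) (b : bool) :
  \prod_(j in N) lik c b (y j) =
  c b ^+ #|Nk N y b| * (1 - c b) ^+ #|Nk N y (~~ b)|.
Proof.
rewrite (bigID (fun j => y j == b)) /=.
rewrite -!prodr_const; congr (_ * _).
  apply: eq_big => j; first by rewrite /Nk inE.
  by move=> /andP[_ /eqP ->]; rewrite /lik eqxx.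
apply: eq_big => j; first by rewrite /Nk inE; case: (y j); case: b.
by move=> /andP[_ H]; rewrite /lik (negbTE H).
Qed.

Theorem mainTheorem2 (R : realType) (T : finType) (pi c : bool -> R) (k : bool)
    (N : {set T}) (y : T -> bool)
    (hpi_pos : forall b, 0 < pi b) (hpi_sum : pi false + pi true = 1)
    (hbal : pi false = pi true)
    (hc0 : forall b, 0 < c b) (hc1 : forall b, c b < 1)
    (hhet : c k < 1 - c (~~ k)) :
  (1 / 2 < posterior pi c N y k) <->
  ((#|Nk N y k|)%:R < (#|Nk N y (~~ k)|)%:R *
     ((ln (c (~~ k)) - ln (1 - c k)) / (ln (c k) - ln (1 - c (~~ k))))).
Proof.
have hpk : pi (~~ k) = pi k by case: (k).
have e1 : forall b, 0 < 1 - c b by move=> b; rewrite subr_gt0.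
set a := #|Nk N y k|; set b := #|Nk N y (~~ k)|.
have Jk : joint pi c N y k = pi k * (c k ^+ a * (1 - c k) ^+ b).
  by rewrite /joint prod_lik.
have Jn : joint pi c N y (~~ k) =
   pi k * (c (~~ k) ^+ b * (1 - c (~~ k)) ^+ a).
  by rewrite /joint prod_lik negbK hpk.
set u := c k ^+ a * (1 - c k) ^+ b.
set v := c (~~ k) ^+ b * (1 - c (~~ k)) ^+ a.
have u0 : 0 < u by rewrite mulr_gt0 // exprn_gt0.
have v0 : 0 < v by rewrite mulr_gt0 // exprn_gt0.
have pk := hpi_pos k.
have S : \sum_(k' : bool) joint pi c N y k' =
   joint pi c N y k + joint pi c N y (~~ k).
  by rewrite big_bool; case: (k) => /=; rewrite addrC.
have step1 : (1 / 2 < posterior pi c N y k) <-> (v < u).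
  rewrite /posterior S Jk Jn ltr_pdivlMr; last by rewrite -mulrDr mulr_gt0 ?addr_gt0.
  have E : (v < u) = (pi k * v < pi k * u) by rewrite ltr_pM2l.
  rewrite E; set P := pi k * u; set Q := pi k * v.
  split => H; lra.
have L : (v < u) = (ln v < ln u) by rewrite ltr_ln ?posrE.
have lu : ln u = a%:R * ln (c k) + b%:R * ln (1 - c k).
  by rewrite /u lnM ?posrE ?exprn_gt0 // !lnXn // !mulr_natl.
have lv : ln v = b%:R * ln (c (~~ k)) + a%:R * ln (1 - c (~~ k)).
  by rewrite /v lnM ?posrE ?exprn_gt0 // !lnXn // !mulr_natl.
have D : ln (c k) - ln (1 - c (~~ k)) < 0.
  by rewrite subr_lt0 ltr_ln ?posrE.
rewrite step1 L lu lv mulrA ltr_ndivlMr //.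
set x1 := ln (c k); set x2 := ln (1 - c k); set x3 := ln (c (~~ k)); set x4 := ln (1 - c (~~ k)).
set A := (a%:R : R); set B := (b%:R : R).
have E : A * (x1 - x4) - B * (x3 - x2) = (A * x1 + B * x2) - (B * x3 + A * x4) by ring.
by rewrite -(subr_gt0 (B * x3 + _)) -(subr_gt0 (B * (x3 - x2))) E.
Qed.
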